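(* Every reflexive forest $T$ (a reflexive graph with no cycles), regarded as a simplicial complex, is cofibrant in the Thomason model structure on $\mathbf{Cpx}$. Furthermore, any inclusion of a tree into another tree is a Thomason cofibration.
   Context: A simplicial complex consists of a vertex set and a collection of nonempty finite subsets (simplices) containing all singletons and closed under nonempty subsets; maps are vertex functions preserving simplices; $\mathbf{Cpx}$ is the category. Reflexive graphs are the complexes whose simplices have at most two elements; a tree is a connected reflexive graph without cycles and a forest is a coproduct of trees. $\mathbf{\Delta}^n$ is the complex on $\{0,\dots,n\}$ with all nonempty subsets simplices, $\mathrm{Sing}(K)_n=\mathbf{Cpx}(\mathbf{\Delta}^n,K)$, $\mathrm{Ex}$ is the right adjoint of barycentric subdivision. Thomason model structure on $\mathbf{Cpx}$: $f$ is a weak equivalence iff $\mathrm{Sing}(f)$ is a weak homotopy equivalence, a fibration iff $\mathrm{Ex}^2\mathrm{Sing}(f)$ is a Kan fibration, and a cofibration iff it has the left lifting property against all trivial fibrations. *)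

(* Defs.v *)
From mathcomp Require Import all_boot.
From Stdlib Require Import Relation_Operators ProofIrrelevance FunctionalExtensionality.

Unset Strict Implicit.
Unset Printing Implicit Defensive.

(* The simplex category: [n] = 'I_n.+1, morphisms = monotone maps.     *)

Definition dmono {m n} (f : {ffun 'I_m.+1 -> 'I_n.+1}) : bool :=
  [forall i : 'I_m.+1, forall j : 'I_m.+1, (i <= j) ==> (f i <= f j)].

Definition dmap m n := {f : {ffun 'I_m.+1 -> 'I_n.+1} | dmono f}.

Definition dfun {m n} (t : dmap m n) : 'I_m.+1 -> 'I_n.+1 := fun i => sval t i.

Lemma dmonoP {m n} (t : dmap m n) (i j : 'I_m.+1) : i <= j -> dfun t i <= dfun t j.
Proof.
move=> hij; have /forallP /(_ i) /forallP /(_ j) /implyP := svalP t; exact.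
Qed.

Lemma dcomp_mono {m n p} (s : dmap n p) (t : dmap m n) :
  dmono [ffun i => dfun s (dfun t i)].
Proof.
apply/forallP=> i; apply/forallP=> j; apply/implyP=> hij; rewrite !ffunE.
by apply: dmonoP; apply: dmonoP.
Qed.

Definition dcomp {m n p} (s : dmap n p) (t : dmap m n) : dmap m p :=
  exist (@dmono m p) _ (dcomp_mono s t).

Lemma did_mono n : dmono [ffun i : 'I_n.+1 => i].
Proof. by apply/forallP=> i; apply/forallP=> j; rewrite !ffunE; apply/implyP. Qed.

Definition did n : dmap n n := exist (@dmono n n) _ (did_mono n).

Lemma dconst_mono m {n} (j : 'I_n.+1) : dmono [ffun _ : 'I_m.+1 => j].
Proof. by apply/forallP=> i; apply/forallP=> i'; rewrite !ffunE leqnn implybT. Qed.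

Definition dconst m {n} (j : 'I_n.+1) : dmap m n := exist (@dmono m n) _ (dconst_mono m j).

Record psset := PSSet {
  ssimp :> nat -> Type;
  sact : forall m n, dmap m n -> ssimp n -> ssimp m }.
Arguments sact {X m n} t x : rename.
Arguments PSSet ssimp sact : assert.

Definition is_sset (X : psset) : Prop :=
  (forall n (x : X n), sact (did n) x = x) /\
  (forall m n p (t : dmap m n) (s : dmap n p) (x : X p),
      sact (dcomp s t) x = sact t (sact s x)).

Record shom (X Y : psset) := SHom {
  shf :> forall n, X n -> Y n;
  shnat : forall m n (t : dmap m n) (x : X n), shf m (sact t x) = sact t (shf n x) }.
Arguments shf {X Y} s n x.
Arguments SHom {X Y} shf shnat.
Arguments shf {X Y} s n x.
Arguments shnat {X Y} s m n t x.

Lemma scomp_nat {X Y Z : psset} (g : shom Y Z) (f : shom X Y) m n (t : dmap m n) (x : X n) :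
  g m (f m (sact t x)) = sact t (g n (f n x)).
Proof. by rewrite !shnat. Qed.

Definition scomp {X Y Z : psset} (g : shom Y Z) (f : shom X Y) : shom X Z :=
  @SHom X Z (fun n x => g n (f n x)) (scomp_nat g f).

Definition Delta (n : nat) : psset :=
  PSSet (fun m => dmap m n) (fun m k t s => dcomp s t).

Definition inhornb {m n} (k : 'I_n.+1) (s : dmap m n) : bool :=
  [exists i : 'I_n.+1, (i != k) && (i \notin codom (dfun s))].

Lemma inhorn_act {m l n} {k : 'I_n.+1} (t : dmap m l) (s : {s : dmap l n | inhornb k s}) :
  inhornb k (dcomp (sval s) t).
Proof.
case: s => s /= /existsP [i /andP [ik ni]].
apply/existsP; exists i; rewrite ik /=; apply: contra ni => /codomP [j ->].
by rewrite /dfun /= ffunE; apply: codom_f.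
Qed.

Definition Horn {n : nat} (k : 'I_n.+1) : psset :=
  PSSet (fun m => {s : dmap m n | inhornb k s})
        (fun m l t s => exist (@inhornb m n k) _ (inhorn_act t s)).

Definition kan_fibration {X Y : psset} (p : shom X Y) : Prop :=
  forall n (k : 'I_n.+2) (a : shom (Horn k) X) (b : shom (Delta n.+1) Y),
    (forall m (h : Horn k m), p m (a m h) = b m (sval h)) ->
    exists l : shom (Delta n.+1) X,
      (forall m (h : Horn k m), l m (sval h) = a m h) /\
      (forall m (t : Delta n.+1 m), p m (l m t) = b m t).

Definition kan_complex (Z : psset) : Prop :=
  forall n (k : 'I_n.+2) (a : shom (Horn k) Z),
    exists l : shom (Delta n.+1) Z, forall m (h : Horn k m), l m (sval h) = a m h.

Definition prod1 (X : psset) : psset :=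
  PSSet (fun m => (X m * dmap m 1)%type)
        (fun m n t p => (sact t p.1, dcomp p.2 t)).

(* an edge of Fun(X,Z) from g to h: a simplicial homotopy X x Delta^1 -> Z *)
Definition shomotopy {X Z : psset} (g h : shom X Z) : Prop :=
  exists H : shom (prod1 X) Z,
    (forall m (x : X m), H m (x, dconst m (ord0 : 'I_2)) = g m x) /\
    (forall m (x : X m), H m (x, dconst m (ord_max : 'I_2)) = h m x).

(* same class in pi_0 Fun(X,Z) *)
Definition shomotopic {X Z : psset} : shom X Z -> shom X Z -> Prop :=
  clos_refl_sym_trans _ (@shomotopy X Z).

(* Weak homotopy equivalence of simplicial sets (Kerodon Def. 3.2.4.1):
   for every Kan complex Z, precomposition
   pi_0 Fun(Y,Z) -> pi_0 Fun(X,Z) is bijective. *)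
Definition weak_homotopy_equivalence {X Y : psset} (f : shom X Y) : Prop :=
  forall Z : psset, is_sset Z -> kan_complex Z ->
    (forall g : shom X Z, exists h : shom Y Z, shomotopic (scomp h f) g) /\
    (forall h1 h2 : shom Y Z,
        shomotopic (scomp h1 f) (scomp h2 f) -> shomotopic h1 h2).

Record cpx := Cpx {
  cvert : Type;
  csimp : (cvert -> Prop) -> Prop;
  csimp_fin : forall S, csimp S ->
     exists (N : nat) (e : 'I_N -> cvert), forall v, S v <-> exists i, e i = v;
  csimp_ne : forall S, csimp S -> exists v, S v;
  csimp_single : forall v, csimp (fun w => w = v);
  csimp_sub : forall S T, csimp S -> (forall v, T v -> S v) -> (exists v, T v) -> csimp T }.
Arguments csimp_sub {c S T} _ _ _.

Record cmap (K L : cpx) := CMap {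
  cmf :> cvert K -> cvert L;
  cmap_simp : forall S, csimp K S -> csimp L (fun w => exists v, S v /\ cmf v = w) }.
Arguments cmf {K L} c v.
Arguments cmap_simp {K L} c {S} _.

Lemma sigP_eq {A : Type} {P : A -> Prop} (x y : {a : A | P a}) :
  sval x = sval y -> x = y.
Proof.
case: x => a pa; case: y => b pb /= eab; subst b.
by rewrite (proof_irrelevance _ pa pb).
Qed.

(* Sing(K)_n = Cpx(Delta^n, K) *)
Definition sing_pred (K : cpx) (n : nat) (s : 'I_n.+1 -> cvert K) : Prop :=
  csimp K (fun v => exists i, s i = v).

Definition sing_simp (K : cpx) (n : nat) := {s : 'I_n.+1 -> cvert K | sing_pred K n s}.

Lemma sing_act_proof {K : cpx} {m n} (t : dmap m n) (s : sing_simp K n) :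
  sing_pred K m (fun i => sval s (dfun t i)).
Proof.
apply: (csimp_sub (svalP s)).
- by move=> v [i <-]; exists (dfun t i).
- by exists (sval s (dfun t ord0)), ord0.
Qed.

Definition Sing (K : cpx) : psset :=
  PSSet (sing_simp K) (fun m n t s => exist (sing_pred K m) _ (sing_act_proof t s)).

Lemma singf_proof {K L : cpx} (f : cmap K L) {n} (s : sing_simp K n) :
  sing_pred L n (fun i => f (sval s i)).
Proof.
apply: (csimp_sub (cmap_simp f (svalP s))).
- by move=> w [i <-]; exists (sval s i); split=> //; exists i.
- by exists (f (sval s ord0)), ord0.
Qed.

Lemma singf_nat {K L : cpx} (f : cmap K L) m n (t : dmap m n) (s : Sing K n) :
  (exist (sing_pred L m) _ (singf_proof f (sact t s)) : Sing L m) =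
  sact t (exist (sing_pred L n) _ (singf_proof f s) : Sing L n).
Proof. exact: sigP_eq. Qed.

Definition Singf {K L : cpx} (f : cmap K L) : shom (Sing K) (Sing L) :=
  @SHom (Sing K) (Sing L) (fun n s => exist (sing_pred L n) _ (singf_proof f s)) (singf_nat f).

(* Ex: (Ex X)_n = sSet(sd Delta^n, X), sd Delta^n = nerve of the poset  *)
(* of nonempty subsets of [n]; its k-simplices are chains.             *)

Definition chainb {n k} (c : {ffun 'I_k.+1 -> {set 'I_n.+1}}) : bool :=
  [forall i : 'I_k.+1, c i != set0] && [forall i : 'I_k.+1, forall j : 'I_k.+1, (i <= j) ==> (c i \subset c j)].

Definition chain n k := {c : {ffun 'I_k.+1 -> {set 'I_n.+1}} | chainb c}.

Lemma chain_ne {n k} (c : chain n k) i : sval c i != set0.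
Proof. by case/andP: (svalP c) => /forallP. Qed.

Lemma chain_mono {n k} (c : chain n k) (i j : 'I_k.+1) : i <= j -> sval c i \subset sval c j.
Proof. by case/andP: (svalP c) => _ /forallP /(_ i) /forallP /(_ j) /implyP. Qed.

Lemma chain_pre_proof {n k m} (c : chain n k) (t : dmap m k) :
  chainb [ffun i => sval c (dfun t i)].
Proof.
apply/andP; split; apply/forallP=> i; rewrite ?ffunE ?chain_ne //.
apply/forallP=> j; apply/implyP=> hij; rewrite !ffunE.
by apply: chain_mono; apply: dmonoP.
Qed.

Definition chain_pre {n k m} (c : chain n k) (t : dmap m k) : chain n m :=
  exist (@chainb n m) _ (chain_pre_proof c t).

Lemma chain_img_proof {n p k} (t : dmap n p) (c : chain n k) :
  chainb [ffun i => dfun t @: sval c i].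
Proof.
apply/andP; split; apply/forallP=> i; rewrite ffunE.
  by rewrite imset_eq0 chain_ne.
apply/forallP=> j; apply/implyP=> hij; rewrite ffunE.
by apply: imsetS; apply: chain_mono.
Qed.

Definition chain_img {n p k} (t : dmap n p) (c : chain n k) : chain p k :=
  exist (@chainb p k) _ (chain_img_proof t c).

Lemma chain_img_pre {n p k m} (t : dmap n p) (c : chain n k) (s : dmap m k) :
  chain_img t (chain_pre c s) = chain_pre (chain_img t c) s.
Proof. by apply: val_inj; apply/ffunP=> i; rewrite /= !ffunE. Qed.

Record exs (X : psset) (n : nat) := Exs {
  exf : forall k, chain n k -> X k;
  exnat : forall m k (s : dmap m k) (c : chain n k),
      exf m (chain_pre c s) = sact s (exf k c) }.
Arguments exf {X n} e {k} c : rename.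
Arguments exnat {X n} e {m k} s c : rename.
Arguments Exs {X n} exf exnat.

Lemma ex_act_proof {X : psset} {m n} (t : dmap m n) (x : exs X n) m' k
  (s : dmap m' k) (c : chain m k) :
  exf x (chain_img t (chain_pre c s)) = sact s (exf x (chain_img t c)).
Proof. by rewrite chain_img_pre exnat. Qed.

Definition Ex (X : psset) : psset :=
  PSSet (exs X) (fun m n t x => Exs (fun k c => exf x (chain_img t c)) (ex_act_proof t x)).

Lemma exs_eq {X : psset} {n} (x y : exs X n) :
  (forall k (c : chain n k), exf x c = exf y c) -> x = y.
Proof.
case: x => fx hx; case: y => fy hy /= h.
have e : fx = fy.
  by apply: functional_extensionality_dep => k; apply: functional_extensionality.
subst fy; by rewrite (proof_irrelevance _ hx hy).
Qed.

Lemma exf_proof {X Y : psset} (f : shom X Y) {n} (x : exs X n) m k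
  (s : dmap m k) (c : chain n k) :
  f m (exf x (chain_pre c s)) = sact s (f k (exf x c)).
Proof. by rewrite exnat shnat. Qed.

Lemma exf_nat {X Y : psset} (f : shom X Y) m n (t : dmap m n) (x : Ex X n) :
  (Exs (fun k c => f k (exf (sact t x : Ex X m) c)) (exf_proof f (sact t x)) : Ex Y m) = sact t (Exs (fun k c => f k (exf x c)) (exf_proof f x) : Ex Y n).
Proof. by apply: exs_eq. Qed.

Definition Exf {X Y : psset} (f : shom X Y) : shom (Ex X) (Ex Y) :=
  @SHom (Ex X) (Ex Y) (fun n x => Exs (fun k c => f k (exf x c)) (exf_proof f x)) (exf_nat f).

Definition th_weq {K L : cpx} (f : cmap K L) : Prop :=
  weak_homotopy_equivalence (Singf f).

Definition th_fib {K L : cpx} (f : cmap K L) : Prop :=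
  kan_fibration (Exf (Exf (Singf f))).

Definition th_trivfib {K L : cpx} (f : cmap K L) : Prop :=
  th_weq f /\ th_fib f.

Definition th_cof {A B : cpx} (i : cmap A B) : Prop :=
  forall (X Y : cpx) (p : cmap X Y), th_trivfib p ->
  forall (u : cmap A X) (v : cmap B Y), (forall a, p (u a) = v (i a)) ->
  exists l : cmap B X, (forall a, l (i a) = u a) /\ (forall b, p (l b) = v b).

Definition empty_cpx : cpx.
Proof.
refine (@Cpx void (fun _ => False) _ _ _ _).
- by [].
- by [].
- by case.
- by [].
Defined.

Definition from_empty (K : cpx) : cmap empty_cpx K.
Proof. refine (@CMap empty_cpx K (fun v : void => match v with end) _); by []. Defined.

Definition th_cofibrant (K : cpx) : Prop := th_cof (from_empty K).

Definition is_refl_graph (K : cpx) : Prop :=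
  forall S, csimp K S -> forall u v w, S u -> S v -> S w -> u = v \/ u = w \/ v = w.

Definition adj {K : cpx} (u v : cvert K) : Prop :=
  u <> v /\ csimp K (fun w => w = u \/ w = v).

Definition acyclic (K : cpx) : Prop :=
  forall n (c : 'I_n -> cvert K), 3 <= n -> injective c ->
    ~ (forall i, adj (c i) (c (ordS i))).

Definition connected (K : cpx) : Prop :=
  inhabited (cvert K) /\ forall u v, clos_refl_trans _ (@adj K) u v.

Definition is_tree (K : cpx) : Prop := is_refl_graph K /\ connected K /\ acyclic K.

Definition is_forest (K : cpx) : Prop := is_refl_graph K /\ acyclic K.

(* Main.v *)
Require Import Defs.
From mathcomp Require Import all_boot zify.
From Stdlib Require Import Relation_Operators ProofIrrelevance FunctionalExtensionality
  PropExtensionality ClassicalEpsilon Classical.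
Set Implicit Arguments.
Unset Strict Implicit.
Unset Printing Implicit Defensive.

Definition ZP : psset := PSSet (fun _ => Prop) (fun _ _ _ P => P).

Lemma ZP_sset : is_sset ZP.
Proof. by split. Qed.

Lemma dmap_eq {m n} (s t : dmap m n) : (forall i, dfun s i = dfun t i) -> s = t.
Proof. by move=> h; apply: val_inj; apply/ffunP => i; apply: h. Qed.

Lemma dfun_dconst m n (j : 'I_n.+1) i : dfun (dconst m j) i = j.
Proof. by rewrite /dfun /= ffunE. Qed.

Lemma dfun_dcomp m n p (s : dmap n p) (t : dmap m n) i : dfun (dcomp s t) i = dfun s (dfun t i).
Proof. by rewrite /dfun /= ffunE. Qed.

Lemma ord1_eq (i j : 'I_1) : i = j.
Proof. by apply: val_inj; case: i => [[]] //; case: j => [[]]. Qed.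

Lemma horn0_const n (k : 'I_n.+2) (a : shom (Horn k) ZP) m (h : Horn k m) :
  a m h = a 0 (sact (dconst 0 ord0) h).
Proof. by rewrite (shnat a). Qed.

Definition emono n (j k : 'I_n.+1) :
  dmono [ffun l : 'I_2 => if l == ord0 then (if j <= k then j else k) else (if j <= k then k else j)].
Proof.
have mM : (if j <= k then j else k) <= (if j <= k then k else j).
  by case: ifP => // /negbT; rewrite -ltnNge => /ltnW.
apply/forallP=> -[[|[|l]] hl]; apply/forallP=> -[[|[|l']] hl'] //; rewrite !ffunE //=.
Qed.

Lemma ZP_kan : kan_complex ZP.
Proof.
move=> n k a.
pose i0 : 'I_n.+2 := if k == ord0 then ord_max else ord0.
have hk : inhornb k (dconst 0 k).
  apply/existsP; exists i0; apply/andP; split.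
    rewrite /i0; case: (k =P ord0) => [->|/eqP] //; by rewrite eq_sym.
  apply/codomP => -[j]; rewrite dfun_dconst /i0.
  by case: (k =P ord0) => [->|/eqP hk0 e]; [move/(congr1 val)|rewrite e eqxx in hk0].
pose hk0 : Horn k 0 := exist (fun s => inhornb k s) _ hk.
have key : forall h : Horn k 0, a 0 h = a 0 hk0.
  move=> [s hs].
  set j := dfun s ord0.
  have sj : s = dconst 0 j by apply: dmap_eq => i; rewrite dfun_dconst (ord1_eq i ord0).
  case: (j =P k) => [ejk|njk].
    by congr (a 0 _); apply: sigP_eq => /=; rewrite sj ejk.
  have /existsP [i /andP [ik ni]] := hs.
  have nij : i != j by apply: contra ni => /eqP ->; apply: codom_f.
  pose e : dmap 1 n.+1 := exist (fun f => dmono f) _ (emono j k).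
  have he : inhornb k e.
    apply/existsP; exists i; rewrite ik /=; apply/codomP => -[l]; rewrite /dfun /= ffunE.
    by case: (l == ord0); case: (j <= k) => /eqP; rewrite ?(negbTE ik) ?(negbTE nij).
  pose he' : Horn k 1 := exist (fun s => inhornb k s) _ he.
  have E0 := horn0_const a he'.
  have E1 : a 1 he' = a 0 (sact (dconst 0 ord_max) he') by rewrite (shnat a).
  have V : forall (h1 h2 : Horn k 0), dfun (sval h1) ord0 = dfun (sval h2) ord0 -> h1 = h2.
    move=> h1 h2 e12; apply: sigP_eq; apply: dmap_eq => l; by rewrite (ord1_eq l ord0).
  have Ej : a 0 (exist _ s hs) = a 0 (sact (dconst 0 (if j <= k then ord0 else ord_max)) he').
    congr (a 0 _); apply: V => /=; rewrite dfun_dcomp dfun_dconst -/j /dfun /= ffunE.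
    by case hjk: (j <= k).
  have Ek : a 0 hk0 = a 0 (sact (dconst 0 (if j <= k then ord_max else ord0)) he').
    congr (a 0 _); apply: V => /=; rewrite dfun_dcomp !dfun_dconst /dfun /= ffunE.
    by case hjk: (j <= k).
  by rewrite Ej Ek; case: ifP => _; rewrite -E0 -E1.
exists (@SHom (Delta n.+1) ZP (fun m t => a 0 hk0) (fun _ _ _ _ => erefl)).
move=> m h /=; by rewrite (horn0_const a h) key.
Qed.

Definition crt (K : cpx) (u w : cvert K) := clos_refl_trans (cvert K) (@adj K) u w.

Lemma adj_sym (K : cpx) (u w : cvert K) : adj u w -> adj w u.
Proof.
move=> [nuw hs]; split; first by move=> e; apply: nuw.
apply: (csimp_sub hs); first by move=> z [|]; [right|left].
by exists w; left.
Qed.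

Lemma crt_sym (K : cpx) (u w : cvert K) : crt u w -> crt w u.
Proof.
elim=> [? ? /adj_sym h|?|? ? ? _ h1 _ h2]; [exact: rt_step|exact: rt_refl|exact: rt_trans h2 h1].
Qed.

Lemma simp_conn (K : cpx) S (u w : cvert K) : csimp K S -> S u -> S w -> crt u w.
Proof.
move=> hS su sw; case: (classic (u = w)) => [->|nuw]; first exact: rt_refl.
apply: rt_step; split => //; apply: (csimp_sub hS); first by move=> z [->|->].
by exists u; left.
Qed.

Lemma shom_eq (X Y : psset) (f g : shom X Y) : (forall n x, f n x = g n x) -> f = g.
Proof.
case: f => f hf; case: g => g hg /= h.
have e : f = g by apply: functional_extensionality_dep => n; apply: functional_extensionality.
subst g; by rewrite (proof_irrelevance _ hf hg).
Qed.

Definition cst (K : cpx) n (x : cvert K) : Sing K n.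
Proof.
exists (fun _ => x); rewrite /sing_pred; apply: (csimp_sub (csimp_single K x)); first by move=> v [_ <-].
by exists x, ord0.
Defined.

Lemma shomotopy_eq0 (K : cpx) (g h : shom (Sing K) ZP) (x : Sing K 0) :
  shomotopy g h -> g 0 x = h 0 x.
Proof.
move=> [H [Hg Hh]].
pose e : prod1 (Sing K) 1 := (sact (dconst 1 ord0) x, did 1).
have E : forall (j : 'I_2), H 0 (sact (dconst 0 j) e) = H 1 e by move=> j; rewrite (shnat H).
have F : forall (j : 'I_2), sact (dconst 0 j) e = (x, dconst 0 j).
  move=> j; rewrite /e /=; congr pair.
    by apply: sigP_eq => /=; apply: functional_extensionality => i; rewrite (ord1_eq i ord0) !dfun_dconst.
  by apply: dmap_eq => i; rewrite dfun_dcomp !dfun_dconst /dfun /= ffunE.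
by rewrite -Hg -Hh -(F ord0) -(F ord_max) !E.
Qed.

Lemma shomotopic_eq0 (K : cpx) (g h : shom (Sing K) ZP) (x : Sing K 0) :
  shomotopic g h -> g 0 x = h 0 x.
Proof.
elim=> [? ? /shomotopy_eq0 -> //| //| ? ? _ -> //| ? ? ? _ -> _ ->//].
Qed.

Lemma pi0_surj (X Y : cpx) (p : cmap X Y) : th_weq p -> forall y0, exists x, crt (p x) y0.
Proof.
move=> hw y0; apply: NNPP => H.
have H' : forall x, ~ crt (p x) y0 by move=> x hx; apply: H; exists x.
pose h1 := @SHom (Sing Y) ZP (fun n s => False) (fun _ _ _ _ => erefl).
have h2nat : forall m n (t : dmap m n) (s : Sing Y n),
   crt (sval (sact t s : Sing Y m) ord0) y0 = sact t (crt (sval s ord0) y0 : ZP n).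
  move=> m n t s /=; apply: propositional_extensionality.
  have c : crt (sval s (dfun t ord0)) (sval s ord0).
    apply: simp_conn (svalP s) _ _; by eexists.
  split=> hc; first exact: rt_trans (crt_sym c) hc.
  exact: rt_trans c hc.
pose h2 := @SHom (Sing Y) ZP (fun n s => crt (sval s ord0) y0) h2nat.
have E : scomp h1 (Singf p) = scomp h2 (Singf p).
  apply: shom_eq => n s /=; apply: propositional_extensionality; split=> //.
  exact: H'.
have := (hw ZP ZP_sset ZP_kan).2 h1 h2.
rewrite E => /(_ (rst_refl _ _ _)) /(@shomotopic_eq0 Y h1 h2 (cst 0 y0)) /=.
by move=> ->; apply: rt_refl.
Qed.

Lemma sing_eq (K : cpx) n (s1 s2 : Sing K n) : (forall i, sval s1 i = sval s2 i) -> s1 = s2.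
Proof. by move=> h; apply: sigP_eq; apply: functional_extensionality. Qed.

Lemma ex2_eq (K : cpx) n (E1 E2 : Ex (Ex (Sing K)) n) :
  (forall k (c : chain n k) k' (d : chain k k') i,
     sval (exf (exf E1 c) d) i = sval (exf (exf E2 c) d) i) -> E1 = E2.
Proof.
move=> h; apply: exs_eq => k c; apply: exs_eq => k' d; apply: sing_eq; exact: h.
Qed.

Definition ex1c (K : cpx) n (x : cvert K) : Ex (Sing K) n :=
  @Exs (Sing K) n (fun k c => cst k x) (fun m k s c => ltac:(by apply: sing_eq)).

Definition ex2c (K : cpx) n (x : cvert K) : Ex (Ex (Sing K)) n :=
  @Exs (Ex (Sing K)) n (fun k c => ex1c k x)
     (fun m k s c => ltac:(by apply: exs_eq => k' d; apply: sing_eq)).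

Definition ahorn (K : cpx) (x : cvert K) (k : 'I_2) : shom (Horn k) (Ex (Ex (Sing K))) :=
  @SHom (Horn k) (Ex (Ex (Sing K))) (fun m h => ex2c m x)
    (fun m n t h => ltac:(by apply: ex2_eq)).

Definition phi {m k k'} (t : dmap m 1) (c : chain m k) (d : chain k k') (i : 'I_k'.+1) : bool :=
  [forall (j | j \in sval d i), forall (l | l \in sval c j), dfun t l == ord0].

Lemma phi_pre_d {m k k' k''} (t : dmap m 1) (c : chain m k) (d : chain k k') (s : dmap k'' k') i :
  phi t c (chain_pre d s) i = phi t c d (dfun s i).
Proof. by rewrite /phi /= ffunE. Qed.

Lemma phi_pre_c {m k k1 k'} (t : dmap m 1) (c : chain m k) (s : dmap k1 k) (d : chain k1 k') i :
  phi t (chain_pre c s) d i = phi t c (chain_img s d) i.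
Proof.
rewrite /phi /=; apply/forall_inP/forall_inP => H j.
  rewrite ffunE => /imsetP [j0 hj0 ->]; have := H j0 hj0; by rewrite ffunE.
move=> hj; rewrite ffunE; apply: H; rewrite ffunE; exact: imset_f.
Qed.

Lemma phi_img_c {m m0 k k'} (t : dmap m 1) (s : dmap m0 m) (c : chain m0 k) (d : chain k k') i :
  phi (dcomp t s) c d i = phi t (chain_img s c) d i.
Proof.
rewrite /phi /=; apply/forall_inP/forall_inP => H j hj; have {}H := H j hj;
  apply/forall_inP; move/forall_inP: H => H.
  rewrite ffunE => l /imsetP [l0 hl0 ->]; have := H l0 hl0; by rewrite dfun_dcomp.
move=> l hl; rewrite dfun_dcomp; apply: H; rewrite ffunE; exact: imset_f.
Qed.

Definition bsimp (Y : cpx) (y y' : cvert Y) (Hyy : csimp Y (fun w => w = y \/ w = y'))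
   {m k k'} (t : dmap m 1) (c : chain m k) (d : chain k k') : Sing Y k'.
Proof.
exists (fun i => if phi t c d i then y else y'); rewrite /sing_pred.
apply: (csimp_sub Hyy); first by move=> w [i <-]; case: ifP; [left|right].
by exists (if phi t c d ord0 then y else y'), ord0.
Defined.

Definition bin (Y : cpx) (y y' : cvert Y) (Hyy : csimp Y (fun w => w = y \/ w = y'))
   {m k} (t : dmap m 1) (c : chain m k) : Ex (Sing Y) k :=
  @Exs (Sing Y) k (fun k' d => bsimp Hyy t c d)
    (fun m0 k1 s d => ltac:(by apply: sing_eq => i /=; rewrite phi_pre_d)).

Definition bout (Y : cpx) (y y' : cvert Y) (Hyy : csimp Y (fun w => w = y \/ w = y'))
   {m} (t : dmap m 1) : Ex (Ex (Sing Y)) m :=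
  @Exs (Ex (Sing Y)) m (fun k c => bin Hyy t c)
    (fun m0 k1 s c => ltac:(by apply: exs_eq => k' d; apply: sing_eq => i /=; rewrite phi_pre_c)).

Definition bmap (Y : cpx) (y y' : cvert Y) (Hyy : csimp Y (fun w => w = y \/ w = y')) :
  shom (Delta 1) (Ex (Ex (Sing Y))) :=
  @SHom (Delta 1) (Ex (Ex (Sing Y))) (fun m t => bout Hyy t)
    (fun m n s t => ltac:(by apply: ex2_eq => k c k' d i /=; rewrite phi_img_c)).

Definition ch01b : chainb [ffun j : 'I_2 => if j == ord0 then [set ord0] else [set: 'I_2]].
Proof.
apply/andP; split; apply/forallP.
  move=> j; rewrite ffunE; case: ifP => _; apply/set0Pn; by exists ord0; rewrite ?inE.
move=> -[[|[|j]] hj]; apply/forallP => -[[|[|j']] hj'] //; rewrite !ffunE //=.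
Qed.
Definition ch01 : chain 1 1 := exist (fun c => chainb c) _ ch01b.

Definition e0b : chainb [ffun j : 'I_1 => [set ord0 : 'I_1]].
Proof.
apply/andP; split; apply/forallP.
  move=> j; rewrite ffunE; apply/set0Pn; by exists ord0; rewrite ?inE.
by move=> j; apply/forallP => j'; rewrite !ffunE subxx implybT.
Qed.
Definition e0 : chain 0 0 := exist (fun c => chainb c) _ e0b.

Lemma Ec : chain_pre ch01 (dconst 0 ord0) = chain_img (dconst 0 ord0) e0.
Proof.
apply: val_inj; apply/ffunP => i; rewrite /= !ffunE dfun_dconst /= imset_set1 dfun_dconst //.
Qed.

Lemma horn_s0 : inhornb (ord0 : 'I_2) (dconst 0 ord0).
Proof.
apply/existsP; exists ord_max; rewrite /=; apply/codomP => -[j]; by rewrite dfun_dconst.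
Qed.

Lemma edge_lift (X Y : cpx) (p : cmap X Y) : th_fib p ->
  forall x y', csimp Y (fun w => w = p x \/ w = y') ->
  exists x', p x' = y' /\ csimp X (fun w => w = x \/ w = x').
Proof.
move=> hf x y' Hyy.
have compat : forall m (h : Horn (ord0 : 'I_2) m),
    Exf (Exf (Singf p)) m (ahorn x ord0 m h) = bmap Hyy m (sval h).
  move=> m [t ht]; apply: ex2_eq => k c k' d i /=.
  have htt : forall l, dfun t l = ord0.
    move=> l; case/existsP: ht => i0 /andP [i00 ni0].
    have hne : dfun t l != i0 by apply: contra ni0 => /eqP <-; exact: codom_f.
    move: hne i00; clear ni0; case: (dfun t l) => [[|[|a]] ha] //; case: i0 => [[|[|b]] hb] //.
    by move=> _ _; apply: val_inj.
  suff -> : phi t c d i by [].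
  by apply/forall_inP => j _; apply/forall_inP => l _; rewrite htt.
have [l [hl1 hl2]] := hf 0 ord0 (ahorn x ord0) (bmap Hyy) compat.
pose L := l 1 (did 1).
pose sig := exf (exf L ch01) ch01.
exists (sval sig ord_max); split.
  have := congr1 (fun E : Ex (Ex (Sing Y)) 1 => sval (exf (exf E ch01) ch01) ord_max) (hl2 1 (did 1)).
  rewrite /= -/L -/sig => ->.
  suff -> : phi (did 1) ch01 ch01 ord_max = false by [].
  apply/negbTE/forall_inP => /(_ ord_max); rewrite /= ffunE /= inE => /(_ isT).
  by move/forall_inP => /(_ ord_max); rewrite inE /dfun /= ffunE => /(_ isT).
have s0x : sval sig ord0 = x.
  pose s0 : dmap 0 1 := dconst 0 ord0.
  transitivity (sval (sact s0 sig) ord0); first by rewrite /= dfun_dconst.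
  rewrite /sig -(exnat (exf L ch01) s0 ch01) Ec.
  have -> : exf (exf L ch01) (chain_img s0 e0) = exf (sact s0 (exf L ch01) : Ex (Sing X) 0) e0 by [].
  rewrite -(exnat L s0 ch01) Ec.
  have -> : exf L (chain_img s0 e0) = exf (sact s0 L : Ex (Ex (Sing X)) 0) e0 by [].
  rewrite /L -(shnat l) /=.
  have -> : dcomp (did 1) s0 = sval (exist (fun s => inhornb (ord0 : 'I_2) s) _ horn_s0).
    by apply: dmap_eq => i; rewrite dfun_dcomp /dfun /= !ffunE.
  by rewrite hl1.
apply: (csimp_sub (svalP sig)); last by exists x; left.
by move=> w [->|->]; [exists ord0|exists ord_max].
Qed.

Definition W (T : cpx) n (g : nat -> cvert T) := forall k, k < n -> adj (g k) (g k.+1).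
Definition NB (T : cpx) n (g : nat -> cvert T) := forall k, k.+2 <= n -> g k <> g k.+2.

Lemma adj_neq (T : cpx) (u w : cvert T) : adj u w -> u <> w.
Proof. by case. Qed.

Lemma NBL (T : cpx) n (g : nat -> cvert T) : acyclic T -> W n g -> NB n g ->
  forall i j, i < j <= n -> g i <> g j.
Proof.
move=> hac hw hnb.
suff H : forall G i, i + G <= n -> 0 < G -> g i <> g (i + G).
  move=> i j /andP [hij hjn]; have := H (j - i) i; rewrite subnKC ?(ltnW hij) //.
  by apply; rewrite ?subn_gt0.
elim/ltn_ind => G IH i hiG hG e.
case: G IH hiG hG e => [|[|[|G]]] IH hiG hG e //.
- by apply: (adj_neq (hw i _)); [lia| rewrite addn1 in e].
- by apply: (hnb i); [lia| rewrite addn2 in e].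
pose c := fun k : 'I_G.+3 => g (i + k).
apply: (hac G.+3 c) => //.
- move=> k1 k2 /= e12; apply: val_inj; have h1 := ltn_ord k1; have h2 := ltn_ord k2.
  case: (ltngtP k1 k2) => // lt; exfalso.
    by apply: (IH (k2 - k1) _ (i + k1)) => //; [lia|lia|lia|rewrite /c in e12; rewrite e12; congr g; lia].
  by apply: (IH (k1 - k2) _ (i + k2)) => //; [lia|lia|lia|rewrite /c in e12; rewrite -e12; congr g; lia].
- move=> k; rewrite /c /=.
  have hk := ltn_ord k.
  case: (ltnP k.+1 G.+3) => hk1.
    rewrite modn_small //; have := hw (i + k) _; rewrite addnS; apply; lia.
  have ek : nat_of_ord k = G.+2 by lia.
  rewrite ek modnn addn0 e; have := hw (i + G.+2) _; rewrite -addnS; apply; lia.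
Qed.

Definition gcat (V : Type) n (g h : nat -> V) := fun k => if k <= n then g k else h (k - n).
Definition grev (V : Type) n (g : nat -> V) := fun k => g (n - k).

Lemma gcat_l (V : Type) n (g h : nat -> V) k : k <= n -> gcat n g h k = g k.
Proof. by rewrite /gcat => ->. Qed.

Lemma gcat_r (V : Type) n (g h : nat -> V) k : g n = h 0 -> n <= k -> gcat n g h k = h (k - n).
Proof.
rewrite /gcat => e hk; case: ifP => // hkn.
have -> : k = n by lia.
by rewrite subnn.
Qed.

Lemma W_cat (T : cpx) n m (g h : nat -> cvert T) :
  W n g -> W m h -> g n = h 0 -> W (n + m) (gcat n g h).
Proof.
move=> hg hh e k hk.
case: (ltnP k n) => hkn.
  rewrite !gcat_l; try lia; apply: hg; lia.
rewrite !gcat_r //; last lia.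
have -> : k.+1 - n = (k - n).+1 by lia.
apply: hh; lia.
Qed.

Lemma NB_cat (T : cpx) n m (g h : nat -> cvert T) :
  NB n g -> NB m h -> g n = h 0 -> (0 < n -> 0 < m -> g n.-1 <> h 1) ->
  NB (n + m) (gcat n g h).
Proof.
move=> hg hh e hj k hk.
case: (leqP k.+2 n) => h1.
  rewrite !gcat_l; try lia; apply: hg; lia.
case: (leqP n k) => h2.
  rewrite !gcat_r //; try lia.
  have -> : k.+2 - n = (k - n).+2 by lia.
  apply: hh; lia.
have ek : k = n.-1 by lia.
rewrite gcat_l ?gcat_r //; try lia.
have -> : k.+2 - n = 1 by lia.
rewrite ek; apply: hj; lia.
Qed.

Lemma W_rev (T : cpx) n (g : nat -> cvert T) : W n g -> W n (grev n g).
Proof.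
move=> hg k hk; rewrite /grev; apply: adj_sym.
have -> : n - k = (n - k.+1).+1 by lia.
apply: hg; lia.
Qed.

Lemma NB_rev (T : cpx) n (g : nat -> cvert T) : NB n g -> NB n (grev n g).
Proof.
move=> hg k hk; rewrite /grev => e.
have := hg (n - k.+2) ltac:(lia).
have -> : (n - k.+2).+2 = n - k by lia.
by rewrite e.
Qed.

Lemma ex_min (P : nat -> Prop) : (exists n, P n) -> exists n, P n /\ forall m, P m -> n <= m.
Proof.
move=> [n hn]; apply: NNPP => H; move: n hn.
elim/ltn_ind => n IH hn; apply: H; exists n; split=> // m hm.
by case: (leqP n m) => // lt; case: (IH m lt hm).
Qed.

Definition conn (T : cpx) (a b : cvert T) := exists n g, g 0 = a /\ g n = b /\ @W T n g.

Lemma shortcut (T : cpx) n (g : nat -> cvert T) k : W n g -> k.+2 <= n -> g k = g k.+2 ->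
  W (n - 2) (fun t => if t <= k then g t else g t.+2) /\
  (fun t => if t <= k then g t else g t.+2) 0 = g 0 /\
  (fun t => if t <= k then g t else g t.+2) (n - 2) = g n.
Proof.
move=> hw hk e; split; last split => //.
  move=> t ht /=; case: ifP => h1; case: ifP => h2.
  - apply: hw; lia.
  - have et : t = k by lia.
    rewrite et e; apply: hw; lia.
  - lia.
  - apply: hw; lia.
case: ifP => h; last by have -> : (n - 2).+2 = n by lia.
have -> : n - 2 = k by lia.
by rewrite e; congr g; lia.
Qed.

Lemma min_walk_NB (T : cpx) (a b : cvert T) :
  conn a b -> exists n g, g 0 = a /\ g n = b /\ W n g /\ NB n g.
Proof.
move=> hc.
have [n [[g [g0 [gn hw]]] hmin]] :=
  ex_min (P := fun n => exists g, g 0 = a /\ g n = b /\ @W T n g) (let: ex_intro n h := hc in ex_intro _ n h).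
exists n, g; do 3!split=> //.
move=> k hk e.
have [hw' [h0 hn]] := shortcut hw hk e.
have := hmin (n - 2) (ex_intro _ _ (conj (etrans h0 g0) (conj (etrans hn gn) hw'))).
lia.
Qed.

Definition reach (T : cpx) (A : cvert T -> Prop) (w : cvert T) n :=
  exists g, A (g 0) /\ g n = w /\ @W T n g.

Definition dist (T : cpx) (A : cvert T -> Prop) (w : cvert T) : nat :=
  epsilon (inhabits 0) (fun n => reach A w n /\ forall m, reach A w m -> n <= m).

Definition HAc (T : cpx) (A : cvert T -> Prop) := forall w, exists n, reach A w n.

Lemma dist_spec (T : cpx) (A : cvert T -> Prop) (HA : HAc A) w :
  reach A w (dist A w) /\ forall m, reach A w m -> dist A w <= m.
Proof.
have [n hn] := HA w.
exact: (epsilon_spec (inhabits 0) (fun n => reach A w n /\ forall m, reach A w m -> n <= m) (ex_min (ex_intro _ n hn))).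
Qed.

Lemma dist0 (T : cpx) (A : cvert T -> Prop) (HA : HAc A) w : dist A w = 0 <-> A w.
Proof.
have [[g [g0 [gd _]]] hm] := dist_spec HA w.
split=> [e|hw]; first by rewrite e in gd; rewrite -gd.
apply/eqP; rewrite -leqn0; apply: hm.
by exists (fun _ => w); do 2!split => //; move=> k.
Qed.

Lemma dist_adj (T : cpx) (A : cvert T -> Prop) (HA : HAc A) w w' :
  adj w w' -> dist A w' <= (dist A w).+1.
Proof.
move=> hadj; have [[g [g0 [gd hw]]] _] := dist_spec HA w.
apply: (dist_spec HA w').2.
exists (fun k => if k <= dist A w then g k else w'); split; first by rewrite leq0n.
split; first by rewrite ltnn.
move=> k hk /=; case: ifP => h1; case: ifP => h2.
- apply: hw; lia.
- have ek : k = dist A w by lia.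
  by rewrite ek gd.
- lia.
- lia.
Qed.

Lemma dist_minwalk (T : cpx) (A : cvert T -> Prop) (HA : HAc A) (g : nat -> cvert T) d :
  A (g 0) -> W d g -> d = dist A (g d) -> forall k, k <= d -> dist A (g k) = k.
Proof.
move=> g0 hw hd k hk; apply/eqP; rewrite eqn_leq; apply/andP; split.
  apply: (dist_spec HA (g k)).2; exists g; do 2!split => //.
  move=> t ht; apply: hw; lia.
apply: contraT; rewrite -ltnNge => lt.
have [[h [h0 [he hwh]]] _] := dist_spec HA (g k).
have : reach A (g d) (dist A (g k) + (d - k)).
  exists (gcat (dist A (g k)) h (fun t => g (k + t))); split.
    by rewrite gcat_l.
  split.
    rewrite gcat_r; first (congr g; lia); rewrite ?addn0 //; lia.
  apply: W_cat => //; last by rewrite addn0.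
  move=> t ht; rewrite addnS; apply: hw; lia.
move/(dist_spec HA (g d)).2; lia.
Qed.

Lemma minwalk (T : cpx) (A : cvert T -> Prop) (HA : HAc A) w :
  exists g, A (g 0) /\ g (dist A w) = w /\ W (dist A w) g /\
    forall k, k <= dist A w -> dist A (g k) = k.
Proof.
have [[g [g0 [gd hw]]] _] := dist_spec HA w.
exists g; do 3!split => //.
apply: dist_minwalk => //; by rewrite gd.
Qed.

Lemma minwalk_NB (T : cpx) (A : cvert T -> Prop) (g : nat -> cvert T) d :
  (forall k, k <= d -> dist A (g k) = k) -> NB d g.
Proof.
move=> hd k hk e; have := congr1 (dist A) e; rewrite !hd; lia.
Qed.

Definition HQc (T : cpx) (A : cvert T -> Prop) :=
  forall a1 a2, A a1 -> A a2 -> conn a1 a2 ->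
    exists q Q, Q 0 = a1 /\ Q q = a2 /\ @W T q Q /\ NB q Q /\ forall k, k <= q -> A (Q k).

Lemma bridge (T : cpx) (A : cvert T -> Prop) (HA : HAc A) (HQ : HQc A) (hac : acyclic T)
  m (b : nat -> cvert T) d :
  0 < m -> W m b -> NB m b -> dist A (b 0) = d -> dist A (b m) = d ->
  (forall k, 0 < k < m -> d < dist A (b k)) -> (m = 1 -> 0 < d) -> False.
Proof.
move=> hm hwb hnb e0 em hint hm1.
have [g1 [g10 [g1d [hw1 hd1]]]] := minwalk HA (b 0).
have [g2 [g20 [g2d [hw2 hd2]]]] := minwalk HA (b m).
rewrite e0 in g1d hw1 hd1; rewrite em in g2d hw2 hd2.
have hn1 := minwalk_NB hd1; have hn2 := minwalk_NB hd2.
have hc : conn (g2 0) (g1 0).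
  exists (d + (m + d)), (gcat d g2 (gcat m (grev m b) (grev d g1))); split.
    by rewrite gcat_l.
  split.
    rewrite gcat_r; last lia; last by rewrite /gcat /grev leq0n subn0.
    rewrite gcat_r; last lia; last by rewrite /grev subnn subn0.
    by rewrite /grev; congr g1; lia.
  apply: W_cat => //; last by rewrite /gcat /grev leq0n subn0.
  apply: W_cat; [exact: W_rev|exact: W_rev|by rewrite /grev subnn subn0].
have [q [Q [Q0 [Qq [hwQ [hnQ hAQ]]]]]] := HQ _ _ g20 g10 hc.
have J1 : Q q = g1 0 by [].
have J2 : gcat q Q g1 (q + d) = b 0 by rewrite gcat_r // ?addKn // leq_addr.
have J3 : gcat (q + d) (gcat q Q g1) b (q + d + m) = grev d g2 0.
  by rewrite gcat_r // ?addKn ?leq_addr // /grev subn0.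
pose F := gcat (q + d + m) (gcat (q + d) (gcat q Q g1) b) (grev d g2).
have hwF : W (q + d + m + d) F.
  apply: W_cat => //; last exact: W_rev.
  by apply: W_cat => //; apply: W_cat.
have hnF : NB (q + d + m + d) F.
  apply: NB_cat => //; last first.
  - move=> _ hd; rewrite gcat_r //; last lia.
    rewrite /grev => e.
    have := congr1 (dist A) e; rewrite hd2; last lia.
    have -> : (q + d + m).-1 - (q + d) = m.-1 by lia.
    case: (ltnP 1 m) => hm2.
      have := hint m.-1 ltac:(lia); lia.
    have -> : m.-1 = 0 by lia.
    rewrite e0; lia.
  - exact: NB_rev.
  apply: NB_cat => //; last first.
  - move=> _ _ e.
    have := congr1 (dist A) e.
    case: (posnP d) => hd.
      have hm2 : 1 < m by case: (ltngtP m 1) => //; [lia|move/hm1; lia].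
      rewrite gcat_l; last lia.
      rewrite hd in e *; rewrite addn0.
      have -> : dist A (Q q.-1) = 0 by apply/dist0 => //; apply: hAQ; lia.
      have := hint 1 ltac:(lia); lia.
    rewrite gcat_r //; last lia.
    have -> : (q + d).-1 - q = d.-1 by lia.
    rewrite hd1; last lia.
    case: (ltnP 1 m) => hm2.
      have := hint 1 ltac:(lia); lia.
    have -> : 1 = m by lia.
    rewrite em; lia.
  apply: NB_cat => //.
  move=> hq hd e; have := congr1 (dist A) e.
  rewrite hd1 //; have -> : dist A (Q q.-1) = 0 by apply/dist0 => //; apply: hAQ; lia.
  by [].
have := NBL hac hwF hnF (i := 0) (j := q + d + m + d) ltac:(lia).
apply; rewrite /F gcat_l // gcat_l // gcat_l // Q0.
rewrite gcat_r //; last lia.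
by rewrite /grev; congr g2; lia.
Qed.

Lemma C1 (T : cpx) (A : cvert T -> Prop) (HA : HAc A) (HQ : HQc A) (hac : acyclic T) w w' :
  adj w w' -> ~ (A w /\ A w') -> dist A w <> dist A w'.
Proof.
move=> hadj hnA e.
pose b := fun k : nat => if k == 0 then w else w'.
apply: (bridge HA HQ hac (m := 1) (b := b) (d := dist A w)) => //.
- by move=> k; rewrite ltnS leqn0 => /eqP ->.
all: try (move=> *; lia).
move=> _; rewrite lt0n; apply/negP => /eqP h; apply: hnA.
  by split; apply/(dist0 HA); rewrite -?e.
Qed.

Lemma C2 (T : cpx) (A : cvert T -> Prop) (HA : HAc A) (HQ : HQc A) (hac : acyclic T) w w1 w2 :
  adj w1 w -> adj w2 w -> dist A w1 = dist A w2 -> dist A w = (dist A w1).+1 -> w1 = w2.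
Proof.
move=> h1 h2 e ew; apply: NNPP => ne.
pose b := fun k : nat => if k == 0 then w1 else if k == 1 then w else w2.
apply: (bridge HA HQ hac (m := 2) (b := b) (d := dist A w1)) => //.
- move=> k; case: k => [|[|k]] //= _; rewrite /b /=; by [exact: h1| exact: adj_sym h2].
- by move=> k; case: k.
- move=> k; case: k => [|[|k]] //= _; rewrite /b /= ew //.
Qed.

Definition liftc (X Y : cpx) (p : cmap X Y) (x : cvert X) (y' : cvert Y) : cvert X :=
  epsilon (inhabits x) (fun x' => p x' = y' /\ csimp X (fun z => z = x \/ z = x')).

Definition parent (T : cpx) (A : cvert T -> Prop) (w : cvert T) : cvert T :=
  epsilon (inhabits w) (fun z => adj z w /\ dist A z = (dist A w).-1).

Lemma parent_spec (T : cpx) (A : cvert T -> Prop) (HA : HAc A) w :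
  0 < dist A w -> adj (parent A w) w /\ dist A (parent A w) = (dist A w).-1.
Proof.
move=> hd; apply: (epsilon_spec (inhabits w) (fun z => adj z w /\ dist A z = (dist A w).-1)).
have [g [g0 [gd [hw hdg]]]] := minwalk HA w.
exists (g (dist A w).-1); split.
  rewrite -{2}gd; have := hw (dist A w).-1 ltac:(lia).
  by rewrite prednK.
apply: hdg; lia.
Qed.

Fixpoint Lf (T X Y : cpx) (p : cmap X Y) (A : cvert T -> Prop) (f0 : cvert T -> cvert X)
  (v : cvert T -> cvert Y) (n : nat) (w : cvert T) : cvert X :=
  match n with
  | 0 => f0 w
  | n'.+1 => liftc p (Lf p A f0 v n' (parent A w)) (v w)
  end.

Definition edge_simp (T : cpx) (u w : cvert T) := csimp T (fun z => z = u \/ z = w).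

Lemma cmap_edge (T Y : cpx) (v : cmap T Y) (u w : cvert T) :
  csimp T (fun z => z = u \/ z = w) -> csimp Y (fun z => z = v u \/ z = v w).
Proof.
move=> h; apply: (csimp_sub (cmap_simp v h)); last by exists (v u); left.
by move=> z [->|->]; [exists u; split=> //; left|exists w; split=> //; right].
Qed.

Lemma Lf_spec (T X Y : cpx) (p : cmap X Y) (v : cmap T Y) (A : cvert T -> Prop)
  (f0 : cvert T -> cvert X) (HA : HAc A)
  (LP : forall x y', csimp Y (fun w => w = p x \/ w = y') ->
          exists x', p x' = y' /\ csimp X (fun w => w = x \/ w = x'))
  (hf0p : forall a, A a -> p (f0 a) = v a) :
  forall n w, dist A w = n ->
    p (Lf p A f0 v n w) = v w /\
    (0 < n -> csimp X (fun z => z = Lf p A f0 v n.-1 (parent A w) \/ z = Lf p A f0 v n w)).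
Proof.
elim=> [|n IH] w hd /=.
  by split=> //; apply: hf0p; apply/(dist0 HA).
have [hpa hpd] := parent_spec HA (w := w) ltac:(lia).
have [IH1 _] := IH (parent A w) ltac:(lia).
have hl : exists x', p x' = v w /\ csimp X (fun z => z = Lf p A f0 v n (parent A w) \/ z = x').
  apply: LP; rewrite IH1; apply: cmap_edge; exact: hpa.2.
have := epsilon_spec (inhabits (Lf p A f0 v n (parent A w))) _ hl.
by rewrite -/(liftc _ _ _) => -[-> h].
Qed.

Lemma swap_simp (K : cpx) (a b : cvert K) :
  csimp K (fun z => z = a \/ z = b) -> csimp K (fun z => z = b \/ z = a).
Proof.
move=> h; apply: (csimp_sub h); last by exists b; left.
by move=> z [|]; [right|left].
Qed.

Lemma liftG (T X Y : cpx) (p : cmap X Y) (v : cmap T Y) (A : cvert T -> Prop)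
  (f0 : cvert T -> cvert X) (HA : HAc A) (HQ : HQc A) (hac : acyclic T)
  (hrg : is_refl_graph T)
  (LP : forall x y', csimp Y (fun w => w = p x \/ w = y') ->
          exists x', p x' = y' /\ csimp X (fun w => w = x \/ w = x'))
  (hf0p : forall a, A a -> p (f0 a) = v a)
  (hf0e : forall a a', A a -> A a' -> adj a a' -> csimp X (fun z => z = f0 a \/ z = f0 a')) :
  exists l : cmap T X, (forall a, A a -> l a = f0 a) /\ forall w, p (l w) = v w.
Proof.
pose lf w := Lf p A f0 v (dist A w) w.
have hP : forall w, p (lf w) = v w.
  by move=> w; have [] := Lf_spec HA LP hf0p (n := dist A w) (w := w) erefl.
have hpar : forall w, 0 < dist A w -> csimp X (fun z => z = lf (parent A w) \/ z = lf w).
  move=> w hd; have [_ ] := Lf_spec HA LP hf0p (n := dist A w) (w := w) erefl.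
  by rewrite /lf (parent_spec HA hd).2; apply.
have hA0 : forall a, A a -> lf a = f0 a.
  by move=> a ha; rewrite /lf (proj2 (dist0 HA a) ha).
have hE : forall w w', adj w w' -> csimp X (fun z => z = lf w \/ z = lf w').
  move=> w w' hadj; case: (classic (A w /\ A w')) => [[hA hA']|hnA].
    by rewrite !hA0 //; apply: hf0e.
  have hne := C1 HA HQ hac hadj hnA.
  wlog lt : w w' hadj hnA hne / dist A w < dist A w'.
    move=> Hw; case: (ltngtP (dist A w) (dist A w')) => h; [exact: Hw| |by []].
    apply: swap_simp; apply: Hw => //; first exact: adj_sym.
    - by move=> [? ?]; apply: hnA.
    - by move=> e; apply: hne.
  have le := dist_adj HA hadj.
  have [hpa hpd] := parent_spec HA (w := w') ltac:(lia).
  have e := C2 HA HQ hac hadj hpa ltac:(lia) ltac:(lia).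
  by rewrite e; apply: hpar; lia.
have hsimp : forall S, csimp T S -> csimp X (fun z => exists u, S u /\ lf u = z).
  move=> S hS; have [w0 hw0] := csimp_ne _ _ hS.
  case: (classic (exists w1, S w1 /\ w1 <> w0)) => [[w1 [hw1 ne]]|hno].
    have hadj : adj w0 w1.
      split; first by move=> e; apply: ne.
      apply: (csimp_sub hS); first by move=> z [->|->].
      by exists w0; left.
    apply: (csimp_sub (hE _ _ hadj)); last by exists (lf w0), w0.
    move=> z [u [hu <-]].
    have [->|[->|e]] := hrg S hS u w0 w1 hu hw0 hw1; [by left|by right|by case: ne].
  apply: (csimp_sub (csimp_single X (lf w0))); last by exists (lf w0), w0.
  move=> z [u [hu <-]]; congr lf; apply: NNPP => ne; apply: hno; by exists u.
exists (@CMap T X lf hsimp); split => //=.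
Qed.

Lemma crt_walk (T : cpx) (u w : cvert T) : crt u w -> conn u w.
Proof.
elim=> {u w} [u w h|u|u w z _ [n [g [g0 [gn hg]]]] _ [m [h [h0 [hm hh]]]]].
- exists 1, (fun k => if k == 0 then u else w); do 2!split => //.
  by move=> k; case: k.
- by exists 0, (fun _ => u); do 2!split => //; move=> k.
- exists (n + m), (gcat n g h); split; first by rewrite gcat_l.
  split; first by rewrite gcat_r ?addKn // ?leq_addr // gn.
  by apply: W_cat => //; rewrite gn.
Qed.

Lemma walk_crt (T : cpx) n (g : nat -> cvert T) : W n g -> crt (g 0) (g n).
Proof.
elim: n => [|n IH] hw; first exact: rt_refl.
apply: rt_trans (IH _) (rt_step _ _ _ _ (hw n _)) => // k hk; apply: hw; lia.
Qed.

Lemma path_lift (X Y : cpx) (p : cmap X Y)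
  (LP : forall x y', csimp Y (fun w => w = p x \/ w = y') ->
          exists x', p x' = y' /\ csimp X (fun w => w = x \/ w = x')) :
  forall y1 y2, crt y1 y2 -> forall x, p x = y1 -> exists x', p x' = y2.
Proof.
move=> y1 y2; elim=> {y1 y2} [y1 y2 h|y|y1 y2 y3 _ IH1 _ IH2] x hx.
- by have [x' [hx' _]] := LP x y2 ltac:(rewrite hx; exact: h.2); exists x'.
- by exists x.
- by have [x' hx'] := IH1 x hx; apply: IH2 hx'.
Qed.

Lemma W_map (T1 T2 : cpx) (i : cmap T1 T2) n g : injective (cmf i) -> W n g ->
  W n (fun k => i (g k)).
Proof.
move=> hi hw k hk; have [ne hs] := hw k hk; split.
  by move=> e; apply: ne; apply: hi.
exact: cmap_edge.
Qed.

Lemma NB_map (T1 T2 : cpx) (i : cmap T1 T2) n g : injective (cmf i) -> NB n g ->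
  NB n (fun k => i (g k)).
Proof. by move=> hi hn k hk e; apply: (hn k hk); apply: hi. Qed.

Definition rep (T : cpx) (w : cvert T) := epsilon (inhabits w) (fun r => crt w r).

Lemma rep_conn (T : cpx) (w : cvert T) : crt w (rep w).
Proof. by apply: (epsilon_spec (inhabits w) (fun r => crt w r)); exists w; apply: rt_refl. Qed.

Lemma rep_eq (T : cpx) (w w' : cvert T) : crt w w' -> rep w = rep w'.
Proof.
move=> h; rewrite /rep.
have -> : (fun r => crt w r) = (fun r => crt w' r).
  apply: functional_extensionality => r; apply: propositional_extensionality; split=> hr.
    exact: rt_trans (crt_sym h) hr.
  exact: rt_trans h hr.
by rewrite (proof_irrelevance _ (inhabits w) (inhabits w')).
Qed.

Lemma part1 (T : cpx) : is_forest T -> th_cofibrant T.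
Proof.
move=> [hrg hac] X Y p [hw hf] u v _.
have LP := edge_lift hf.
have surj : forall y, exists x, p x = y.
  by move=> y; have [x hx] := pi0_surj hw y; exact: (path_lift LP hx (erefl (p x))).
pose f0 := fun w => proj1_sig (constructive_indefinite_description _ (surj (v w))).
pose A := fun w : cvert T => rep w = w.
have HA : HAc A.
  move=> w; have [n [g [g0 [gn hg]]]] := crt_walk (crt_sym (rep_conn w)).
  exists n, g; split=> //; rewrite g0 /A; apply: rep_eq; apply: crt_sym; exact: rep_conn.
have HQ : HQc A.
  move=> a1 a2 h1 h2 [n [g [g0 [gn hg]]]].
  have e : a1 = a2 by rewrite -h1 -h2; apply: rep_eq; rewrite -g0 -gn; exact: walk_crt.
  by exists 0, (fun _ => a1); do 4!split => //; move=> k.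
have [l [_ hl]] := liftG (f0 := f0) HA HQ hac hrg LP
   (fun a _ => proj2_sig (constructive_indefinite_description _ (surj (v a))))
   (fun a a' h1 h2 hadj => False_ind _ (adj_neq hadj (etrans (esym h1)
       (etrans (rep_eq (rt_step _ _ _ _ hadj)) h2)))).
by exists l; split=> // -[].
Qed.

Lemma part2 (T1 T2 : cpx) (i : cmap T1 T2) :
  is_tree T1 -> is_tree T2 -> injective (cmf i) -> th_cof i.
Proof.
move=> [hrg1 [[[a0] hc1] hac1]] [hrg2 [[_ hc2] hac2]] hi X Y p [hw hf] u v huv.
have LP := edge_lift hf.
pose inv := fun w => epsilon (inhabits a0) (fun a => i a = w).
have hinv : forall a, inv (i a) = a.
  move=> a; apply: hi; exact: (epsilon_spec (inhabits a0) (fun b => i b = i a) (ex_intro _ a erefl)).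
pose f0 := fun w => u (inv w).
pose A := fun w => exists a, i a = w.
have HA : HAc A.
  move=> w; have [n [g [g0 [gn hg]]]] := crt_walk (hc2 (i a0) w).
  by exists n, g; split=> //; exists a0.
have HQ : HQc A.
  move=> _ _ [b1 <-] [b2 <-] _.
  have [n [g [g0 [gn [hg hn]]]]] := min_walk_NB (crt_walk (hc1 b1 b2)).
  exists n, (fun k => i (g k)); split; first by rewrite g0.
  split; first by rewrite gn.
  split; first exact: W_map.
  split; first exact: NB_map.
  by move=> k _; exists (g k).
have hf0p : forall a, A a -> p (f0 a) = v a.
  by move=> _ [b <-]; rewrite /f0 hinv huv.
have hf0e : forall a a', A a -> A a' -> adj a a' -> csimp X (fun z => z = f0 a \/ z = f0 a').
  move=> _ _ [b <-] [b' <-] hadj; rewrite /f0 !hinv.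
  have [n [g [g0 [gn [hg hn]]]]] := min_walk_NB (crt_walk (hc1 b b')).
  case: (ltnP n 2) => hn2.
    case: n hn2 g0 gn hg hn => [|[|n]] // _ g0 gn hg hn.
      by exfalso; apply: (adj_neq hadj); rewrite -g0 -gn.
    apply: cmap_edge; have := (hg 0 isT).2; by rewrite g0 gn.
  exfalso.
  pose h := fun k => i (g k).
  pose F := gcat n h (fun k => if k == 0 then i b' else i b).
  have hwF : W (n + 1) F.
    apply: W_cat; [exact: W_map| |by rewrite /h gn].
    by move=> k; case: k => // _; exact: adj_sym.
  have hnF : NB (n + 1) F.
    apply: NB_cat; [exact: NB_map| by move=> k; case: k| by rewrite /h gn|].
    move=> _ _ e; apply: (NBL hac1 hg hn (i := 0) (j := n.-1)); first lia.
    by rewrite g0; apply: hi.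
  apply: (NBL hac2 hwF hnF (i := 0) (j := n + 1)); first lia.
  rewrite /F gcat_l // gcat_r //; last lia; last by rewrite /h gn.
  by rewrite /h g0 addKn.
have [l [hl1 hl2]] := liftG (f0 := f0) HA HQ hac2 hrg2 LP hf0p hf0e.
exists l; split=> // a; rewrite hl1; last by exists a.
by rewrite /f0 hinv.
Qed.

Theorem corollary6p8 :
  (forall T : cpx, is_forest T -> th_cofibrant T) /\
  (forall (T1 T2 : cpx) (i : cmap T1 T2),
      is_tree T1 -> is_tree T2 -> injective (cmf i) -> th_cof i).
Proof.
split; [exact: part1 | exact: part2].
Qed.
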